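(* Let $z_1,z_2,z_3$ be the (physical, real) coupling variables $z_i=\tanh K_i$ of the anisotropic triangular Ising model, and set $v_i=e^{-2K_i}=\frac{1-z_i}{1+z_i}$ for $i=1,2,3$. Define $$a=2z_3(1+z_1^2)(1+z_2^2)+4z_1z_2(1+z_3^2),\qquad c=(1-z_1^2)(1-z_2^2),\qquad b=z_3^2c,$$ and the Toeplitz matrix elements (Fourier coefficients) $$w_n=\int_{-\pi}^{\pi}\frac{d\theta}{2\pi}\,\frac{a\cos(n\theta)-b\cos((n-1)\theta)-c\cos((n+1)\theta)}{\sqrt{a^2+b^2+c^2-2a(b+c)\cos\theta+2bc\cos(2\theta)}},\qquad n\in\mathbb Z,$$ i.e. the Fourier coefficients of $w(\zeta)=\left(\frac{a-b\zeta-c\zeta^{-1}}{a-b\zeta^{-1}-c\zeta}\right)^{1/2}$ on $|\zeta|=1$. Let $\Gamma=1+v_1^2v_2^2-(v_1^2+v_2^2)v_3^2$. Then for every $n\in\mathbb Z$, \begin{multline*} (n-3)v_1^2v_2^2(1-v_3^2)^2w_{n-3}-2v_1v_2\Gamma\left[v_3+(n-2)(1+v_3^2)\right]w_{n-2}\\ +\Big[(n-1)(v_1^4+4v_1^2v_2^2+v_2^4)v_3^4-2(n-1)\left(v_1^2+v_2^2-6v_1^2v_2^2+v_1^4v_2^2+v_1^2v_2^4\right)v_3^2\\ +(n-1)(1+4v_1^2v_2^2+v_1^4v_2^4)+8v_1^2v_2^2v_3(1+v_3^2)\Big]w_{n-1}\\ -2v_1v_2\Gamma\left[v_3+n(1+v_3^2)\right]w_n+(n+1)v_1^2v_2^2(1-v_3^2)^2w_{n+1}=0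 . \end{multline*} In particular, for $n=-1$ and $n=3$ this relation involves only four consecutive terms (it is of third order).
   Context: The anisotropic triangular Ising model has nearest-neighbour couplings $K_1$ (horizontal), $K_2$ (vertical) and $K_3$ (up-right diagonal) on a square grid; $z_i=\tanh K_i\in[-1,1]$ and $v_i=e^{-2K_i}\in[0,\infty)$. The couplings are assumed such that the square root in the integrand is nonvanishing on $\theta\in[-\pi,\pi]$ (positive branch), so that the $w_n$ are well defined. *)

(* Defs.v *)
From Stdlib Require Import Reals ZArith.
From Coquelicot Require Import Coquelicot.
Open Scope R_scope.

Definition tanh (K : R) : R := (exp K - exp (- K)) / (exp K + exp (- K)).

Definition zv (K : R) : R := tanh K.
Definition vv (K : R) : R := exp (-2 * K).

Definition coef_a (z1 z2 z3 : R) : R :=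
  2 * z3 * (1 + z1 ^ 2) * (1 + z2 ^ 2) + 4 * z1 * z2 * (1 + z3 ^ 2).
Definition coef_c (z1 z2 z3 : R) : R := (1 - z1 ^ 2) * (1 - z2 ^ 2).
Definition coef_b (z1 z2 z3 : R) : R := z3 ^ 2 * coef_c z1 z2 z3.

Definition denom (a b c theta : R) : R :=
  a ^ 2 + b ^ 2 + c ^ 2 - 2 * a * (b + c) * cos theta + 2 * b * c * cos (2 * theta).

Definition wn (a b c : R) (n : Z) : R :=
  RInt (fun theta =>
          (a * cos (IZR n * theta) - b * cos (IZR (n - 1) * theta)
             - c * cos (IZR (n + 1) * theta)) / sqrt (denom a b c theta))
       (- PI) PI / (2 * PI).

Definition wK (K1 K2 K3 : R) (n : Z) : R :=
  let z1 := zv K1 in let z2 := zv K2 in let z3 := zv K3 in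
  wn (coef_a z1 z2 z3) (coef_b z1 z2 z3) (coef_c z1 z2 z3) n.

(* Main.v *)
Require Import Defs.
From Stdlib Require Import Reals ZArith Lra Lia.
From Coquelicot Require Import Coquelicot.
Open Scope R_scope.
Definition cs2 (C S : R) := C^2 - S^2.
Definition ss2 (C S : R) := 2*S*C.
Definition cs3 (C S : R) := cs2 C S*C - ss2 C S*S.
Definition ss3 (C S : R) := ss2 C S*C + cs2 C S*S.
Definition cs4 (C S : R) := cs3 C S*C - ss3 C S*S.
Definition ss4 (C S : R) := ss3 C S*C + cs3 C S*S.
Definition cjj C S (j:Z) := match j with 0%Z => 1 | 1%Z | (-1)%Z => C | 2%Z | (-2)%Z => cs2 C S
 | 3%Z | (-3)%Z => cs3 C S | _ => cs4 C S end.
Definition sjj C S (j:Z) := match j with 0%Z => 0 | 1%Z => S | (-1)%Z => -S | 2%Z => ss2 C S | (-2)%Z => - ss2 C S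
 | 3%Z => ss3 C S | (-3)%Z => - ss3 C S | 4%Z => ss4 C S | _ => - ss4 C S end.
Definition XX x y C S j := x * cjj C S j - y * sjj C S j.
Definition NN a b c x y C S j := a * XX x y C S j - b * XX x y C S (j-1) - c * XX x y C S (j+1).

Lemma core (a b c m x y C S : R) : S^2 + C^2 = 1 ->
  let k := m - 1 in
  let YY j := y * cjj C S j + x * sjj C S j in
  let M := - a * YY (-1)%Z + b * YY (-2)%Z + c * YY 0%Z in
  let Mp := - a * (m-1) * XX x y C S (-1) + b * (m-2) * XX x y C S (-2) + c * m * XX x y C S 0 in
  let D := a^2 + b^2 + c^2 - 2*a*(b+c)*C + 2*b*c*cs2 C S in
  let Dp := 2*a*(b+c)*S - 4*b*c*ss2 C S in
  Mp * D + M * Dp / 2 =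
    (2-k)*b*c * NN a b c x y C S (-3) + (k*a*(b+c) - 3/2*a*b - 1/2*a*c) * NN a b c x y C S (-2)
    + (-k*(a^2+b^2+c^2) + b^2 - c^2) * NN a b c x y C S (-1)
    + (k*a*(b+c) + 3/2*a*c + 1/2*a*b) * NN a b c x y C S 0
    - (k+2)*b*c * NN a b c x y C S 1.
Proof.
  intros H k YY M Mp D Dp.
  apply Rminus_diag_uniq.
  assert (E : Mp * D + M * Dp / 2 - ((2-k)*b*c * NN a b c x y C S (-3) + (k*a*(b+c) - 3/2*a*b - 1/2*a*c) * NN a b c x y C S (-2)
    + (-k*(a^2+b^2+c^2) + b^2 - c^2) * NN a b c x y C S (-1)
    + (k*a*(b+c) + 3/2*a*c + 1/2*a*b) * NN a b c x y C S 0
    - (k+2)*b*c * NN a b c x y C S 1) = (S^2 + C^2 - 1) * ((1)*b^2*c*m*x*S^2 + (-1)*b^2*c*x*S^2 + (3/2)*a*b*c*y*S + (3/2)*a*b^2*y*S + (-1)*a*b^2*m*y*S + (-2)*a*b*c*m*x*C + (3/2)*a*b*c*x*C + (1)*b^2*c*m*x*C^2 + (1)*a^2*b*m*x + (-1)*a*b^2*m*x*C + (-1)*b^2*c*x*C^2 + (-1/2)*a^2*b*x + (3/2)*a*b^2*x*C + (-1/2)*a^2*c*x + (1)*a^2*c*m*x + (1)*b^2*c*m*x + (-1)*b^2*c*x)).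
  { unfold Mp, D, M, Dp, YY, k, NN, XX; cbn -[Rmult Rplus Rminus Ropp Rdiv Rinv pow IZR]; unfold cs4, ss4, cs3, ss3, cs2, ss2; field. }
  rewrite E, H; ring.
Qed.

Lemma trig_small (t : R) (j : Z) : (-4 <= j <= 4)%Z ->
  cos (IZR j * t) = cjj (cos t) (sin t) j /\ sin (IZR j * t) = sjj (cos t) (sin t) j.
Proof.
  assert (P2 : cos (2*t) = cs2 (cos t) (sin t) /\ sin (2*t) = ss2 (cos t) (sin t)).
  { replace (2*t) with (t+t) by ring. rewrite cos_plus, sin_plus; unfold cs2, ss2; split; ring. }
  assert (P3 : cos (3*t) = cs3 (cos t) (sin t) /\ sin (3*t) = ss3 (cos t) (sin t)).
  { replace (3*t) with (2*t+t) by ring. rewrite cos_plus, sin_plus; destruct P2 as [-> ->]; unfold cs3, ss3; split; ring. }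
  assert (P4 : cos (4*t) = cs4 (cos t) (sin t) /\ sin (4*t) = ss4 (cos t) (sin t)).
  { replace (4*t) with (3*t+t) by ring. rewrite cos_plus, sin_plus; destruct P3 as [-> ->]; unfold cs4, ss4; split; ring. }
  intros Hj.
  assert (j = -4 \/ j = -3 \/ j = -2 \/ j = -1 \/ j = 0 \/ j = 1 \/ j = 2 \/ j = 3 \/ j = 4)%Z as HH by lia.
  destruct HH as [->|[->|[->|[->|[->|[->|[->|[->| ->]]]]]]]]; simpl cjj; simpl sjj;
  try (replace (IZR (-4) * t) with (- (4*t)) by (simpl; ring));
  try (replace (IZR (-3) * t) with (- (3*t)) by (simpl; ring));
  try (replace (IZR (-2) * t) with (- (2*t)) by (simpl; ring));
  try (replace (IZR (-1) * t) with (- t) by (simpl; ring));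
  try (replace (IZR 1 * t) with t by (simpl; ring));
  try (replace (IZR 0 * t) with 0 by (simpl; ring));
  rewrite ?cos_neg, ?sin_neg, ?cos_0, ?sin_0; try tauto;
  try (destruct P2 as [-> ->]; tauto);
  try (destruct P3 as [-> ->]; tauto);
  try (destruct P4 as [-> ->]; tauto).
Qed.

Definition YYd x y C S j := y * cjj C S j + x * sjj C S j.

Lemma cos_m (m t : R) (j : Z) : (-4 <= j <= 4)%Z ->
  cos ((m + IZR j) * t) = XX (cos (m*t)) (sin (m*t)) (cos t) (sin t) j.
Proof.
  intros Hj; destruct (trig_small t j Hj) as [E1 E2].
  replace ((m + IZR j) * t) with (m*t + IZR j * t) by ring.
  rewrite cos_plus, E1, E2; unfold XX; ring.
Qed.

Lemma sin_m (m t : R) (j : Z) : (-4 <= j <= 4)%Z ->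
  sin ((m + IZR j) * t) = YYd (cos (m*t)) (sin (m*t)) (cos t) (sin t) j.
Proof.
  intros Hj; destruct (trig_small t j Hj) as [E1 E2].
  replace ((m + IZR j) * t) with (m*t + IZR j * t) by ring.
  rewrite sin_plus, E1, E2; unfold YYd; ring.
Qed.

Lemma NN_ok (a b c m t : R) (j : Z) : (-3 <= j <= 3)%Z ->
  a * cos ((m + IZR j) * t) - b * cos ((m + IZR j - 1) * t) - c * cos ((m + IZR j + 1) * t)
  = NN a b c (cos (m*t)) (sin (m*t)) (cos t) (sin t) j.
Proof.
  intros Hj.
  replace (m + IZR j - 1) with (m + IZR (j - 1)) by (rewrite minus_IZR; ring).
  replace (m + IZR j + 1) with (m + IZR (j + 1)) by (rewrite plus_IZR; ring).
  rewrite !cos_m by lia. reflexivity.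
Qed.

Definition Fi a b c s t := (a*cos(s*t) - b*cos((s-1)*t) - c*cos((s+1)*t)) / sqrt (denom a b c t).
Definition Gf a b c m t := (- a * sin((m + IZR (-1))*t) + b * sin((m + IZR (-2))*t) + c*sin((m + IZR 0)*t)) * sqrt (denom a b c t).
Definition Comb a b c m t := let k := m - 1 in
    (2-k)*b*c * Fi a b c (m + IZR (-3)) t + (k*a*(b+c) - 3/2*a*b - 1/2*a*c) * Fi a b c (m + IZR (-2)) t
    + (-k*(a^2+b^2+c^2) + b^2 - c^2) * Fi a b c (m + IZR (-1)) t
    + (k*a*(b+c) + 3/2*a*c + 1/2*a*b) * Fi a b c (m + IZR 0) t
    - (k+2)*b*c * Fi a b c (m + IZR 1) t.

Lemma final_alg a b c m x y C S sq : S^2 + C^2 = 1 -> 0 < sq ->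
  sq * sq = a ^ 2 + b ^ 2 + c ^ 2 - 2 * a * (b + c) * C + 2 * b * c * cs2 C S ->
  (- a * ((m + -1) * 1 * XX x y C S (-1)) +
   b * ((m + -2) * 1 * XX x y C S (-2)) +
   c * ((m + 0) * 1 * XX x y C S 0)) * sq +
  (- a * YYd x y C S (-1) + b * YYd x y C S (-2) + c * YYd x y C S 0) *
  ((- (2 * a * (b + c) * (1 * - S)) + 2 * b * c * (2 * 1 * - ss2 C S)) * / (2 * sq)) =
  (2 - (m - 1)) * b * c * (NN a b c x y C S (-3) / sq) +
  ((m - 1) * a * (b + c) - 3 / 2 * a * b - 1 / 2 * a * c) * (NN a b c x y C S (-2) / sq) +
  (- (m - 1) * (a ^ 2 + b ^ 2 + c ^ 2) + b ^ 2 - c ^ 2) * (NN a b c x y C S (-1) / sq) +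
  ((m - 1) * a * (b + c) + 3 / 2 * a * c + 1 / 2 * a * b) * (NN a b c x y C S 0 / sq) -
  (m - 1 + 2) * b * c * (NN a b c x y C S 1 / sq).
Proof.
  intros H Hs Hss. pose proof (core a b c m x y C S H) as Hc. cbv zeta in Hc.
  apply (Rmult_eq_reg_r sq); [|lra].
  transitivity ((- a * (m - 1) * XX x y C S (-1) + b * (m - 2) * XX x y C S (-2) + c * m * XX x y C S 0) * (sq*sq)
    + (- a * YYd x y C S (-1) + b * YYd x y C S (-2) + c * YYd x y C S 0) *
      (2 * a * (b + c) * S - 4 * b * c * ss2 C S) / 2).
  { field. lra. }
  rewrite Hss. unfold YYd. rewrite Hc. field. lra.
Qed.

Lemma deriv_G a b c m t : 0 < denom a b c t -> is_derive (Gf a b c m) t (Comb a b c m t).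
Proof.
  intros Hd. unfold Gf, denom. auto_derive; [exact Hd|].
  match goal with |- context [sqrt ?e] => change e with (denom a b c t) end.
  unfold Comb, Fi.
  rewrite (NN_ok a b c m t (-3)), (NN_ok a b c m t (-2)), (NN_ok a b c m t (-1)),
     (NN_ok a b c m t 0), (NN_ok a b c m t 1) by lia.
  rewrite (sin_m m t (-1)), (sin_m m t (-2)), (sin_m m t 0) by lia.
  rewrite (cos_m m t (-1)), (cos_m m t (-2)), (cos_m m t 0) by lia.
  destruct (trig_small t 2 ltac:(lia)) as [E1 E2]. simpl in E1, E2.
  rewrite E2.
  assert (HD : denom a b c t = a^2 + b^2 + c^2 - 2*a*(b+c)*cos t + 2*b*c*cs2 (cos t) (sin t)).
  { unfold denom. rewrite E1. reflexivity. }
  pose proof (sqrt_lt_R0 _ Hd) as Hsq.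
  pose proof (sqrt_sqrt _ (Rlt_le _ _ Hd)) as Hss.
  set (sq := sqrt (denom a b c t)) in *.
  rewrite HD in Hss.
  pose proof (core a b c m (cos (m*t)) (sin (m*t)) (cos t) (sin t) ltac:(rewrite <- (sin2_cos2 t); unfold Rsqr; ring)) as Hc.
  apply final_alg; auto.
  rewrite <- (sin2_cos2 t); unfold Rsqr; ring.
Qed.

Lemma wn_Fi a b c p : wn a b c p = RInt (Fi a b c (IZR p)) (-PI) PI / (2*PI).
Proof.
  unfold wn. f_equal. apply RInt_ext. intros t _. unfold Fi.
  rewrite minus_IZR, plus_IZR. reflexivity.
Qed.

Lemma Fi_cont a b c s t : 0 < denom a b c t -> continuous (Fi a b c s) t.
Proof.
  intros Hd. pose proof (sqrt_lt_R0 _ Hd) as Hs. cbv [denom Rminus pow] in Hd, Hs.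
  apply (@ex_derive_continuous R_AbsRing R_NormedModule). unfold Fi, denom. auto_derive.
  repeat split; lra.
Qed.

Lemma Comb_cont a b c m t : 0 < denom a b c t -> continuous (Comb a b c m) t.
Proof.
  intros Hd. pose proof (sqrt_lt_R0 _ Hd) as Hs. cbv [denom Rminus pow] in Hd, Hs.
  apply (@ex_derive_continuous R_AbsRing R_NormedModule). unfold Comb, Fi, denom. auto_derive.
  repeat split; lra.
Qed.

Lemma sin_int_PI (n j : Z) : sin ((IZR n + IZR j) * PI) = 0 /\ sin ((IZR n + IZR j) * - PI) = 0.
Proof.
  split; apply sin_eq_0_1.
  - exists (n + j)%Z. rewrite plus_IZR. reflexivity.
  - exists (- (n + j))%Z. rewrite opp_IZR, plus_IZR. ring.
Qed.

Lemma recur_abc a b c (Hpos : forall t, - PI <= t <= PI -> 0 < denom a b c t) (n : Z) :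
  let m := IZR n in
  (2 - (m - 1)) * b * c * wn a b c (n - 3)%Z
  + ((m - 1) * a * (b + c) - 3 / 2 * a * b - 1 / 2 * a * c) * wn a b c (n - 2)%Z
  + (- (m - 1) * (a ^ 2 + b ^ 2 + c ^ 2) + b ^ 2 - c ^ 2) * wn a b c (n - 1)%Z
  + ((m - 1) * a * (b + c) + 3 / 2 * a * c + 1 / 2 * a * b) * wn a b c n
  - (m - 1 + 2) * b * c * wn a b c (n + 1)%Z = 0.
Proof.
  intros m.
  assert (Hint : forall z, Rmin (-PI) PI <= z <= Rmax (-PI) PI -> 0 < denom a b c z).
  { intros z Hz. pose proof PI_RGT_0. apply Hpos. rewrite Rmin_left, Rmax_right in Hz by lra. exact Hz. }
  assert (HI : forall j, is_RInt (Fi a b c (m + IZR j)) (-PI) PI (RInt (Fi a b c (m + IZR j)) (-PI) PI)).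
  { intros j. apply (@RInt_correct R_CompleteNormedModule). apply (@ex_RInt_continuous R_CompleteNormedModule). intros z Hz. apply Fi_cont, Hint, Hz. }
  set (I j := RInt (Fi a b c (m + IZR j)) (-PI) PI) in HI.
  assert (Hc : is_RInt (Comb a b c m) (-PI) PI
     (minus (plus (plus (plus (scal ((2 - (m-1)) * b * c) (I (-3)%Z))
        (scal ((m - 1) * a * (b + c) - 3 / 2 * a * b - 1 / 2 * a * c) (I (-2)%Z)))
        (scal (- (m - 1) * (a ^ 2 + b ^ 2 + c ^ 2) + b ^ 2 - c ^ 2) (I (-1)%Z)))
        (scal ((m - 1) * a * (b + c) + 3 / 2 * a * c + 1 / 2 * a * b) (I 0%Z)))
        (scal ((m - 1 + 2) * b * c) (I 1%Z)))).
  { pose proof (@is_RInt_scal R_NormedModule _ _ _ ((2 - (m-1)) * b * c) _ (HI (-3)%Z)) as J1.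
    pose proof (@is_RInt_scal R_NormedModule _ _ _ ((m - 1) * a * (b + c) - 3 / 2 * a * b - 1 / 2 * a * c) _ (HI (-2)%Z)) as J2.
    pose proof (@is_RInt_scal R_NormedModule _ _ _ (- (m - 1) * (a ^ 2 + b ^ 2 + c ^ 2) + b ^ 2 - c ^ 2) _ (HI (-1)%Z)) as J3.
    pose proof (@is_RInt_scal R_NormedModule _ _ _ ((m - 1) * a * (b + c) + 3 / 2 * a * c + 1 / 2 * a * b) _ (HI 0%Z)) as J4.
    pose proof (@is_RInt_scal R_NormedModule _ _ _ ((m - 1 + 2) * b * c) _ (HI 1%Z)) as J5.
    pose proof (@is_RInt_minus R_NormedModule _ _ _ _ _ _
      (@is_RInt_plus R_NormedModule _ _ _ _ _ _
        (@is_RInt_plus R_NormedModule _ _ _ _ _ _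
          (@is_RInt_plus R_NormedModule _ _ _ _ _ _ J1 J2) J3) J4) J5) as J.
    eapply (@is_RInt_ext R_NormedModule); [|exact J].
    intros t _. unfold Comb.
    generalize (Fi a b c (m + IZR (-3)) t) (Fi a b c (m + IZR (-2)) t) (Fi a b c (m + IZR (-1)) t)
      (Fi a b c (m + IZR 0) t) (Fi a b c (m + IZR 1) t). clearbody m. clear.
    intros. cbn. ring. }
  assert (Hd : is_RInt (Comb a b c m) (-PI) PI (minus (Gf a b c m PI) (Gf a b c m (-PI)))).
  { apply (@is_RInt_derive R_CompleteNormedModule).
    - intros x Hx. apply deriv_G, Hint, Hx.
    - intros x Hx. apply Comb_cont, Hint, Hx. }
  assert (HG : minus (Gf a b c m PI) (Gf a b c m (-PI)) = 0).
  { unfold Gf, m. destruct (sin_int_PI n (-1)) as [-> ->]. destruct (sin_int_PI n (-2)) as [-> ->].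
    destruct (sin_int_PI n 0) as [-> ->]. unfold minus, plus, opp; cbn. ring. }
  rewrite HG in Hd. apply (@is_RInt_unique R_CompleteNormedModule) in Hd. apply (@is_RInt_unique R_CompleteNormedModule) in Hc. rewrite Hc in Hd.
  rewrite !wn_Fi.
  replace (IZR (n - 3)) with (m + IZR (-3)) by (unfold m; rewrite minus_IZR; ring).
  replace (IZR (n - 2)) with (m + IZR (-2)) by (unfold m; rewrite minus_IZR; ring).
  replace (IZR (n - 1)) with (m + IZR (-1)) by (unfold m; rewrite minus_IZR; ring).
  replace (IZR (n + 1)) with (m + IZR 1) by (unfold m; rewrite plus_IZR; ring).
  replace (IZR n) with (m + IZR 0) by (unfold m; ring).
  fold (I (-3)%Z) (I (-2)%Z) (I (-1)%Z) (I 0%Z) (I 1%Z).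
  clearbody I. clear HI Hc.
  unfold minus, plus, scal, opp in Hd; cbn in Hd. unfold mult in Hd; cbn in Hd.
  pose proof PI_RGT_0.
  apply (Rmult_eq_reg_r (2*PI)); [|lra].
  rewrite Rmult_0_l, <- Hd. field. lra.
Qed.

Lemma zv_vv K : zv K = (1 - vv K) / (1 + vv K).
Proof.
  unfold zv, Defs.tanh, vv.
  replace (-2 * K) with (- K + - K) by ring. rewrite exp_plus, exp_Ropp.
  pose proof (exp_pos K) as He. set (e := exp K) in *.
  assert (0 < e*e) by nra.
  field; split; try lra.
Qed.

Definition zf v := (1 - v) / (1 + v).

Lemma final_v v1 v2 v3 m W3 W2 W1 W0 Wp : 0 < v1 -> 0 < v2 -> 0 < v3 ->
  let a := coef_a (zf v1) (zf v2) (zf v3) in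
  let b := coef_b (zf v1) (zf v2) (zf v3) in
  let c := coef_c (zf v1) (zf v2) (zf v3) in
  (2 - (m - 1)) * b * c * W3
  + ((m - 1) * a * (b + c) - 3 / 2 * a * b - 1 / 2 * a * c) * W2
  + (- (m - 1) * (a ^ 2 + b ^ 2 + c ^ 2) + b ^ 2 - c ^ 2) * W1
  + ((m - 1) * a * (b + c) + 3 / 2 * a * c + 1 / 2 * a * b) * W0
  - (m - 1 + 2) * b * c * Wp = 0 ->
  let Gamma := 1 + v1 ^ 2 * v2 ^ 2 - (v1 ^ 2 + v2 ^ 2) * v3 ^ 2 in
  (m - 3) * v1 ^ 2 * v2 ^ 2 * (1 - v3 ^ 2) ^ 2 * W3
  - 2 * v1 * v2 * Gamma * (v3 + (m - 2) * (1 + v3 ^ 2)) * W2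
  + ((m - 1) * (v1 ^ 4 + 4 * v1 ^ 2 * v2 ^ 2 + v2 ^ 4) * v3 ^ 4
     - 2 * (m - 1) * (v1 ^ 2 + v2 ^ 2 - 6 * v1 ^ 2 * v2 ^ 2 + v1 ^ 4 * v2 ^ 2
                      + v1 ^ 2 * v2 ^ 4) * v3 ^ 2
     + (m - 1) * (1 + 4 * v1 ^ 2 * v2 ^ 2 + v1 ^ 4 * v2 ^ 4)
     + 8 * v1 ^ 2 * v2 ^ 2 * v3 * (1 + v3 ^ 2)) * W1
  - 2 * v1 * v2 * Gamma * (v3 + m * (1 + v3 ^ 2)) * W0
  + (m + 1) * v1 ^ 2 * v2 ^ 2 * (1 - v3 ^ 2) ^ 2 * Wp = 0.
Proof.
  intros h1 h2 h3 a b c H Gamma.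
  rewrite <- (Rmult_0_r (- (1+v1)^4 * (1+v2)^4 * (1+v3)^4 / 256)), <- H.
  unfold Gamma, a, b, c, coef_a, coef_b, coef_c, zf.
  field. lra.
Qed.
Theorem corollary2 (K1 K2 K3 : R)
  (Hsqrt : forall theta, - PI <= theta <= PI ->
     0 < denom (coef_a (zv K1) (zv K2) (zv K3)) (coef_b (zv K1) (zv K2) (zv K3))
               (coef_c (zv K1) (zv K2) (zv K3)) theta)
  (n : Z) :
  let v1 := vv K1 in let v2 := vv K2 in let v3 := vv K3 in
  let w := wK K1 K2 K3 in
  let Gamma := 1 + v1 ^ 2 * v2 ^ 2 - (v1 ^ 2 + v2 ^ 2) * v3 ^ 2 in
  let m := IZR n in
  (m - 3) * v1 ^ 2 * v2 ^ 2 * (1 - v3 ^ 2) ^ 2 * w (n - 3)%Z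
  - 2 * v1 * v2 * Gamma * (v3 + (m - 2) * (1 + v3 ^ 2)) * w (n - 2)%Z
  + ((m - 1) * (v1 ^ 4 + 4 * v1 ^ 2 * v2 ^ 2 + v2 ^ 4) * v3 ^ 4
     - 2 * (m - 1) * (v1 ^ 2 + v2 ^ 2 - 6 * v1 ^ 2 * v2 ^ 2 + v1 ^ 4 * v2 ^ 2
                      + v1 ^ 2 * v2 ^ 4) * v3 ^ 2
     + (m - 1) * (1 + 4 * v1 ^ 2 * v2 ^ 2 + v1 ^ 4 * v2 ^ 4)
     + 8 * v1 ^ 2 * v2 ^ 2 * v3 * (1 + v3 ^ 2)) * w (n - 1)%Z
  - 2 * v1 * v2 * Gamma * (v3 + m * (1 + v3 ^ 2)) * w n
  + (m + 1) * v1 ^ 2 * v2 ^ 2 * (1 - v3 ^ 2) ^ 2 * w (n + 1)%Z = 0.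

Proof.
  intros v1 v2 v3 w Gamma m.
  pose proof (recur_abc _ _ _ Hsqrt n) as H. cbv zeta in H.
  unfold w, wK. cbv zeta.
  assert (Z : forall K, zv K = zf (vv K)) by exact zv_vv.
  rewrite !Z in H |- *.
  exact (final_v (vv K1) (vv K2) (vv K3) m _ _ _ _ _ (exp_pos _) (exp_pos _) (exp_pos _) H).
Qed.
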